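(* Let $A\in\mathbb{F}_2^{m_A\times n_A}$, $B\in\mathbb{F}_2^{m_B\times n_B}$ and consider the hypergraph product code $H_X=[A\otimes I_{m_B}\mid I_{m_A}\otimes B]$, $H_Z=[I_{n_A}\otimes B^{T}\mid A^{T}\otimes I_{n_B}]$. The left--right circuit with left/right partition given by this block structure (so $L_X=A\otimes I_{m_B}$, $R_X=I_{m_A}\otimes B$, $L_Z=I_{n_A}\otimes B^T$, $R_Z=A^T\otimes I_{n_B}$) and minimal edge colourings of $L_X,R_X,L_Z,R_Z$ has depth $t=\delta(A)+\delta(B)+2$. Moreover $\delta(H_{XZ})=\delta(A)+\delta(B)$, so every single-ancilla CNOT-based SEC for this code has depth at least $\delta(A)+\delta(B)$.
   Context: For a binary matrix $M$, $r(M)$ and $c(M)$ are its maximum row and column weights and $\delta(M)=\max(r(M),c(M))$ (the maximum degree of its bipartite Tanner graph, with a variable node per column, a check node per row, and an edge per entry 1). $H_{XZ}$ denotes $H_X$ stacked vertically above $H_Z$. Single-ancilla CNOT-based SEC: each check (row of $H_X$ or $H_Z$) has a dedicated ancilla; an $X$ check's ancilla is prepared in $|+\rangle$, CNOTs go from ancilla to each data qubit in its support, then measured in $X$; a $Z$ check's ancilla is prepared in $|0\rangle$, CNOTs go from each data qubit in its support to the ancilla, then measured in $Z$. Each operation takes one time step and a qubit participates in at most one operation per step. The depth of an SEC is $t=\lim_{m\to\infty}T^{(m)}/m$, where $T^{(m)}$ is the number of time steps for $m$ consecutive rounds (rounds may overlap in time). Left--right circuit (LRC): partition the data qubits into a left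 and right set, writing $H_X=[L_X\mid R_X]$, $H_Z=[L_Z\mid R_Z]$. Choose a proper edge colouring $C(H)$ with colours $\{1,\dots,|C(H)|\}$ of the Tanner graph of each $H\in\{L_X,R_X,L_Z,R_Z\}$ (minimal means $|C(H)|=\delta(H)$). CNOTs of $L_X$ and $R_Z$ are applied in parallel, the CNOT on an edge of colour $c$ at time step $c+1$, taking $t_1=\max(|C(L_X)|,|C(R_Z)|)$ steps; then CNOTs of $L_Z$ and $R_X$ are applied with colour $c$ at time step $t_1+1+c$, taking $t_2=\max(|C(L_Z)|,|C(R_X)|)$ steps. $X$ ancillas are prepared at step 1 and measured at step $t_1+t_2+2$; $Z$ ancillas are measured at step $t_1+2$ and prepared at step $t_1+3$ (for the next round), with rounds repeated periodically, so the LRC has depth $t_1+t_2+2$. *)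

(* Defs.v *)
From mathcomp Require Import all_boot all_order all_algebra.
From mathcomp Require Import mxtens.
From mathcomp Require Import all_classical all_reals all_analysis.

Set Implicit Arguments.
Unset Strict Implicit.
Unset Printing Implicit Defensive.

Import Order.TTheory GRing.Theory Num.Theory.
Import numFieldNormedType.Exports.

Notation bmx m n := ('M['F_2]_(m, n)).

Section Weights.
Variables (m n : nat).
Implicit Type M : bmx m n.

Definition row_wt M (i : 'I_m) : nat := #|[set j : 'I_n | M i j != 0%R]|.
Definition col_wt M (j : 'I_n) : nat := #|[set i : 'I_m | M i j != 0%R]|.

Definition rmax M : nat := \max_(i < m) row_wt M i.
Definition cmax M : nat := \max_(j < n) col_wt M j.
Definition delta M : nat := maxn (rmax M) (cmax M).

(* A proper edge colouring of the Tanner graph of M (check node per row,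
   variable node per column, edge per entry 1) with colour set {1,...,k}:
   col i j is the colour of edge (i,j) (only meaningful when M i j = 1). *)
Definition proper_edge_colouring M (k : nat) (col : 'I_m -> 'I_n -> nat) : Prop :=
  [/\ (forall i j, M i j != 0%R -> 1 <= col i j <= k),
      (forall i j j', M i j != 0%R -> M i j' != 0%R -> j != j' -> col i j != col i j')
    & (forall i i' j, M i j != 0%R -> M i' j != 0%R -> i != i' -> col i j != col i' j)].
End Weights.

Definition HXZ (mx mz n : nat) (HX : bmx mx n) (HZ : bmx mz n) : bmx (mx + mz) n :=
  col_mx HX HZ.

(* Left--right circuit for H_X = [L_X | R_X], H_Z = [L_Z | R_Z]: the data
   of a proper edge colouring (with |C(H)| = k_H colours) of each block.  *)
Record LRC (mx mz nl nr : nat)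
    (LX : bmx mx nl) (RX : bmx mx nr) (LZ : bmx mz nl) (RZ : bmx mz nr) := {
  kLX : nat; cLX : 'I_mx -> 'I_nl -> nat; cLX_proper : proper_edge_colouring LX kLX cLX;
  kRX : nat; cRX : 'I_mx -> 'I_nr -> nat; cRX_proper : proper_edge_colouring RX kRX cRX;
  kLZ : nat; cLZ : 'I_mz -> 'I_nl -> nat; cLZ_proper : proper_edge_colouring LZ kLZ cLZ;
  kRZ : nat; cRZ : 'I_mz -> 'I_nr -> nat; cRZ_proper : proper_edge_colouring RZ kRZ cRZ }.

Definition lrc_minimal mx mz nl nr LX RX LZ RZ (C : @LRC mx mz nl nr LX RX LZ RZ) : Prop :=
  [/\ kLX C = delta LX, kRX C = delta RX, kLZ C = delta LZ & kRZ C = delta RZ].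

Definition lrc_depth mx mz nl nr LX RX LZ RZ (C : @LRC mx mz nl nr LX RX LZ RZ) : nat :=
  maxn (kLX C) (kRZ C) + maxn (kLZ C) (kRX C) + 2.

(* Single-ancilla CNOT-based SEC for a check matrix H (rows = X and Z
   checks, each with its own dedicated ancilla; columns = data qubits).
   Operations of m rounds: in round k, check i's ancilla is prepared,
   undergoes one CNOT with each data qubit j in the support of row i,
   and is measured.  (The preparation basis and CNOT direction depend on
   the X/Z type of the check; they play no role in the timing.)          *)
Inductive sec_op (m r n : nat) :=
  | Prep of 'I_m & 'I_r
  | Meas of 'I_m & 'I_r
  | CNOT of 'I_m & 'I_r & 'I_n.
Arguments Prep {m r n}.
Arguments Meas {m r n}.
Arguments CNOT {m r n}.

Inductive qubit (r n : nat) := Anc of 'I_r | Data of 'I_n.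
Arguments Anc {r n}.
Arguments Data {r n}.

Section SEC.
Variables (r n : nat) (H : bmx r n).

Definition sec_op_valid m (o : sec_op m r n) : bool :=
  if o is CNOT _ i j then H i j != 0%R else true.

Definition acts_on m (o : sec_op m r n) (q : qubit r n) : bool :=
  match o, q with
  | Prep _ i, Anc i' => i == i'
  | Meas _ i, Anc i' => i == i'
  | CNOT _ i _, Anc i' => i == i'
  | CNOT _ _ j, Data j' => j == j'
  | _, _ => false
  end.

(* Rounds may overlap. *)
Record sec_schedule (m T : nat) := {
  time : sec_op m r n -> nat;
  time_bound : forall o, sec_op_valid o -> time o < T;
  one_op_per_step : forall (o o' : sec_op m r n) (q : qubit r n),
      sec_op_valid o -> sec_op_valid o' -> o <> o' ->
      acts_on o q -> acts_on o' q -> time o <> time o';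
  prep_before_cnot : forall (k : 'I_m) (i : 'I_r) (j : 'I_n), H i j != 0%R -> time (Prep k i) < time (CNOT k i j);
  cnot_before_meas : forall (k : 'I_m) (i : 'I_r) (j : 'I_n), H i j != 0%R -> time (CNOT k i j) < time (Meas k i) }.

Definition sec_has_depth (R : realType) (T : nat -> nat)
    (S : forall m, sec_schedule m (T m)) (t : R) : Prop :=
  ((fun m : nat => ((T m)%:R / m%:R : R)%R) @ \oo --> t)%classic.
End SEC.

Section HGP.
Variables (mA nA mB nB : nat) (A : bmx mA nA) (B : bmx mB nB).

Definition hgp_LX : bmx (mA * mB) (nA * mB) := A *t (1%:M : bmx mB mB).
Definition hgp_RX : bmx (mA * mB) (mA * nB) := (1%:M : bmx mA mA) *t B.
Definition hgp_LZ : bmx (nA * nB) (nA * mB) := (1%:M : bmx nA nA) *t B^T.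
Definition hgp_RZ : bmx (nA * nB) (mA * nB) := A^T *t (1%:M : bmx nB nB).

Definition hgp_HX : bmx (mA * mB) (nA * mB + mA * nB) := row_mx hgp_LX hgp_RX.
Definition hgp_HZ : bmx (nA * nB) (nA * mB + mA * nB) := row_mx hgp_LZ hgp_RZ.
End HGP.

(* Main.v *)
Require Import Defs.
From mathcomp Require Import all_boot all_order all_algebra.
From mathcomp Require Import mxtens.
From mathcomp Require Import all_classical all_reals all_analysis.
From mathcomp Require Import zify.
Set Implicit Arguments.
Unset Strict Implicit.
Import Order.TTheory GRing.Theory Num.Theory.

Import numFieldNormedType.Exports.
Lemma card_bij (A B : finType) (f : A -> B) (g : B -> A) (P : pred B) :
  cancel f g -> cancel g f -> #|[set y | P y]| = #|[set x | P (f x)]|.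
Proof.
move=> fK gK.
have -> : [set y | P y] = f @: [set x | P (f x)].
  apply/setP => y; rewrite inE; apply/idP/imsetP.
    by move=> Py; exists (g y); rewrite ?inE gK.
  by case=> x; rewrite inE => Px ->.
by rewrite card_imset //; apply: can_inj fK.
Qed.

Lemma card_split a b (P : pred 'I_(a + b)) :
  #|[set c | P c]| = #|[set j | P (lshift b j)]| + #|[set k | P (rshift a k)]|.
Proof.
rewrite -!sum1_card big_mkcond big_split_ord /= -!big_mkcond /=.
by congr (_ + _); apply: eq_bigl => i; rewrite !inE.
Qed.

Lemma rw_tens m1 n1 m2 n2 (X : bmx m1 n1) (Y : bmx m2 n2) i k :
  row_wt (X *t Y) (mxtens_index (i, k)) = row_wt X i * row_wt Y k.
Proof.
rewrite /row_wt (card_bij _ (@mxtens_indexK _ _) (@mxtens_unindexK _ _)).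
rewrite -cardsX; apply: eq_card => -[j l].
by rewrite !inE tensmxE mulf_eq0 negb_or.
Qed.

Lemma rw_tr m n (X : bmx m n) j : row_wt X^T j = col_wt X j.
Proof. by rewrite /row_wt /col_wt; apply: eq_card => i; rewrite !inE mxE. Qed.

Lemma cw_tr m n (X : bmx m n) i : col_wt X^T i = row_wt X i.
Proof. by rewrite /row_wt /col_wt; apply: eq_card => j; rewrite !inE mxE. Qed.

Lemma cw_tens m1 n1 m2 n2 (X : bmx m1 n1) (Y : bmx m2 n2) j l :
  col_wt (X *t Y) (mxtens_index (j, l)) = col_wt X j * col_wt Y l.
Proof. by rewrite -rw_tr trmx_tens rw_tens !rw_tr. Qed.

Lemma rw_rowmx m n1 n2 (L : bmx m n1) (R : bmx m n2) i :
  row_wt (row_mx L R) i = row_wt L i + row_wt R i.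
Proof.
rewrite /row_wt card_split; congr (_ + _); apply: eq_card => j;
  by rewrite !inE ?row_mxEl ?row_mxEr.
Qed.

Lemma rw_colmx_u m1 m2 n (U : bmx m1 n) (D : bmx m2 n) i :
  row_wt (col_mx U D) (lshift m2 i) = row_wt U i.
Proof. by rewrite /row_wt; apply: eq_card => j; rewrite !inE col_mxEu. Qed.

Lemma rw_colmx_d m1 m2 n (U : bmx m1 n) (D : bmx m2 n) i :
  row_wt (col_mx U D) (rshift m1 i) = row_wt D i.
Proof. by rewrite /row_wt; apply: eq_card => j; rewrite !inE col_mxEd. Qed.

Lemma cw_colmx m1 m2 n (U : bmx m1 n) (D : bmx m2 n) j :
  col_wt (col_mx U D) j = col_wt U j + col_wt D j.
Proof. by rewrite -!rw_tr tr_col_mx rw_rowmx. Qed.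

Lemma cw_rowmx_l m n1 n2 (L : bmx m n1) (R : bmx m n2) j :
  col_wt (row_mx L R) (lshift n2 j) = col_wt L j.
Proof. by rewrite -!rw_tr tr_row_mx rw_colmx_u. Qed.

Lemma cw_rowmx_r m n1 n2 (L : bmx m n1) (R : bmx m n2) j :
  col_wt (row_mx L R) (rshift n1 j) = col_wt R j.
Proof. by rewrite -!rw_tr tr_row_mx rw_colmx_d. Qed.

Lemma rw_1 n (i : 'I_n) : row_wt (1%:M : bmx n n) i = 1.
Proof.
rewrite /row_wt -[RHS](cards1 i); apply: eq_card => j.
by rewrite !inE mxE (eq_sym j i); case: (i == j).
Qed.

Lemma cw_1 n (i : 'I_n) : col_wt (1%:M : bmx n n) i = 1.
Proof. by rewrite -rw_tr trmx1 rw_1. Qed.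

Lemma max_eq (I : finType) (F : I -> nat) v :
  (forall i, F i <= v) -> (exists i, F i = v) -> \max_i F i = v.
Proof.
move=> ub [i0 e]; apply/eqP; rewrite eqn_leq; apply/andP; split.
  by apply/bigmax_leqP => i _.
by rewrite -e leq_bigmax.
Qed.

Lemma wit n (F : 'I_n -> nat) : 0 < n -> exists i, F i = \max_i F i.
Proof. by move=> n0; have [|i0 e] := @bigop.eq_bigmax _ F; [by rewrite card_ord | by exists i0]. Qed.

Lemma max_tens_sum p q (F : 'I_(p * q) -> nat) f g : 0 < p -> 0 < q ->
  (forall a b, F (mxtens_index (a, b)) = f a + g b) ->
  \max_c F c = (\max_a f a) + (\max_b g b).
Proof.
move=> p0 q0 E; apply: max_eq.
  by move=> c; case: (mxtens_indexP c) => a b; rewrite E leq_add // leq_bigmax.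
have [a0 ea] := wit f p0; have [b0 eb] := wit g q0.
by exists (mxtens_index (a0, b0)); rewrite E ea eb.
Qed.

Lemma max_tens_mul p q (F : 'I_(p * q) -> nat) f g : 0 < p -> 0 < q ->
  (forall a b, F (mxtens_index (a, b)) = f a * g b) ->
  \max_c F c = (\max_a f a) * (\max_b g b).
Proof.
move=> p0 q0 E; apply: max_eq.
  by move=> c; case: (mxtens_indexP c) => a b; rewrite E; apply: leq_mul; apply: leq_bigmax.
have [a0 ea] := wit f p0; have [b0 eb] := wit g q0.
by exists (mxtens_index (a0, b0)); rewrite E ea eb.
Qed.

Lemma max_1 n : 0 < n -> \max_(i < n) 1 = 1.
Proof. by move=> n0; apply: max_eq => //; exists (Ordinal n0). Qed.

Lemma rmax_tens m1 n1 m2 n2 (X : bmx m1 n1) (Y : bmx m2 n2) : 0 < m1 -> 0 < m2 ->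
  rmax (X *t Y) = rmax X * rmax Y.
Proof. by move=> h1 h2; apply: max_tens_mul => // a b; rewrite rw_tens. Qed.

Lemma cmax_tens m1 n1 m2 n2 (X : bmx m1 n1) (Y : bmx m2 n2) : 0 < n1 -> 0 < n2 ->
  cmax (X *t Y) = cmax X * cmax Y.
Proof. by move=> h1 h2; apply: max_tens_mul => // a b; rewrite cw_tens. Qed.

Lemma rmax_1 n : 0 < n -> rmax (1%:M : bmx n n) = 1.
Proof. by move=> n0; rewrite /rmax (eq_bigr (fun _ => 1)) ?max_1 // => i _; rewrite rw_1. Qed.

Lemma cmax_1 n : 0 < n -> cmax (1%:M : bmx n n) = 1.
Proof. by move=> n0; rewrite /cmax (eq_bigr (fun _ => 1)) ?max_1 // => i _; rewrite cw_1. Qed.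

Lemma rmax_tr m n (X : bmx m n) : rmax X^T = cmax X.
Proof. by apply: eq_bigr => i _; rewrite rw_tr. Qed.

Lemma cmax_tr m n (X : bmx m n) : cmax X^T = rmax X.
Proof. by apply: eq_bigr => i _; rewrite cw_tr. Qed.

Lemma delta_tr m n (X : bmx m n) : delta X^T = delta X.
Proof. by rewrite /delta rmax_tr cmax_tr maxnC. Qed.

Lemma delta_tens1 m n p (X : bmx m n) : 0 < m -> 0 < n -> 0 < p ->
  delta (X *t (1%:M : bmx p p)) = delta X.
Proof. by move=> *; rewrite /delta rmax_tens ?cmax_tens ?rmax_1 ?cmax_1 ?muln1. Qed.

Lemma delta_1tens m n p (X : bmx m n) : 0 < m -> 0 < n -> 0 < p ->
  delta ((1%:M : bmx p p) *t X) = delta X.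
Proof. by move=> *; rewrite /delta rmax_tens ?cmax_tens ?rmax_1 ?cmax_1 ?mul1n. Qed.
Lemma inj_count (A : finType) (P : {set A}) (f : A -> nat) T :
  {in P &, injective f} -> (forall x, x \in P -> f x < T) -> #|P| <= T.
Proof.
move=> finj fb.
have U : uniq [seq f x | x <- enum P].
  by rewrite map_inj_in_uniq ?enum_uniq // => x y; rewrite !mem_enum; apply: finj.
have := uniq_leq_size U (s2 := iota 0 T).
rewrite size_map size_iota -cardE; apply=> y /mapP [x]; rewrite mem_enum => xP ->.
by rewrite mem_iota add0n fb.
Qed.

Lemma sched_col r n (H : bmx r n) m T (S : sec_schedule H m T) (j : 'I_n) :
  m * col_wt H j <= T.
Proof.
set P := finset.setX [set: 'I_m] [set i : 'I_r | H i j != 0%R].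
have -> : m * col_wt H j = #|P| by rewrite cardsX cardsT card_ord.
apply: (@inj_count _ P (fun p => time S (CNOT p.1 p.2 j))).
  move=> [k i] [k' i']; rewrite !inE /= => h1 h2 e.
  case: (eqVneq (k, i) (k', i')) => // ne; exfalso.
  apply: (one_op_per_step (q := Data j) _ _ _ _ _ e) => //=.
  by move=> [e1 e2]; move: ne; rewrite e1 e2 eqxx.
move=> [k i]; rewrite !inE /= => h; exact: time_bound.
Qed.

Lemma sched_row r n (H : bmx r n) m T (S : sec_schedule H m T) (i : 'I_r) :
  m * row_wt H i <= T.
Proof.
set P := finset.setX [set: 'I_m] [set j : 'I_n | H i j != 0%R].
have -> : m * row_wt H i = #|P| by rewrite cardsX cardsT card_ord.
apply: (@inj_count _ P (fun p => time S (CNOT p.1 i p.2))).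
  move=> [k j] [k' j']; rewrite !inE /= => h1 h2 e.
  case: (eqVneq (k, j) (k', j')) => // ne; exfalso.
  apply: (one_op_per_step (q := Anc i) _ _ _ _ _ e) => //=.
  by move=> [e1 e2]; move: ne; rewrite e1 e2 eqxx.
move=> [k j]; rewrite !inE /= => h; exact: time_bound.
Qed.

Lemma sched_delta r n (H : bmx r n) m T (S : sec_schedule H m T) :
  0 < m -> delta H * m <= T.
Proof.
move=> m0; rewrite -leq_divRL //; rewrite geq_max; apply/andP; split.
  by apply/bigmax_leqP => i _; rewrite leq_divRL // mulnC (sched_row S i).
by apply/bigmax_leqP => i _; rewrite leq_divRL // mulnC (sched_col S i).
Qed.

Section CL.
Local Open Scope classical_set_scope.
Lemma closed_lb (R : realType) (u : nat -> R) t (c : R) :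
  (u @ \oo --> t)%classic -> (\forall n \near \oo, c <= u n)%R -> (c <= t)%R.
Proof.
move=> H N.
have := @closed_cvg _ _ _ _ u _ (@closed_ge _ c).
by move=> /(_ _ _ N t H).
Qed.
End CL.


Lemma depth_lb r n (H : bmx r n) (R : realType) (T : nat -> nat)
  (S : forall m, sec_schedule H m (T m)) (t : R) :
  sec_has_depth S t -> ((delta H)%:R <= t)%R.
Proof.
rewrite /sec_has_depth => Ht.
apply: (closed_lb Ht).
exists 1%N => // k /= k0.
rewrite ler_pdivlMr ?ltr0n // -natrM ler_nat.
exact: sched_delta.
Qed.

Lemma rmax_colmx m1 m2 n (U : bmx m1 n) (D : bmx m2 n) :
  rmax (col_mx U D) = maxn (rmax U) (rmax D).
Proof.
rewrite /rmax big_split_ord /=; congr maxn; apply: eq_bigr => i _;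
  by rewrite ?rw_colmx_u ?rw_colmx_d.
Qed.

Theorem proposition1 (mA nA mB nB : nat) (A : bmx mA nA) (B : bmx mB nB) :
  (0 < mA)%N -> (0 < nA)%N -> (0 < mB)%N -> (0 < nB)%N ->
  (* the LRC with the block partition and minimal edge colourings has depth delta(A)+delta(B)+2 *)
  (forall C : LRC (hgp_LX mB A) (hgp_RX mA B) (hgp_LZ nA B) (hgp_RZ nB A),
      lrc_minimal C -> lrc_depth C = (delta A + delta B + 2)%N)
  /\ delta (HXZ (hgp_HX A B) (hgp_HZ A B)) = (delta A + delta B)%N
  /\ (forall (R : realType) (T : nat -> nat)
        (S : forall m, sec_schedule (HXZ (hgp_HX A B) (hgp_HZ A B)) m (T m)) (t : R),
        sec_has_depth S t -> ((delta A + delta B)%:R <= t)%R).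
Proof.
move=> pmA pnA pmB pnB.
have dXZ : delta (HXZ (hgp_HX A B) (hgp_HZ A B)) = (delta A + delta B)%N.
  rewrite /delta /HXZ /hgp_HX /hgp_HZ /hgp_LX /hgp_RX /hgp_LZ /hgp_RZ.
  have r1 : rmax (row_mx (A *t (1%:M : bmx mB mB)) ((1%:M : bmx mA mA) *t B)) = rmax A + rmax B.
    rewrite /rmax; apply: max_tens_sum => // a b.
    by rewrite rw_rowmx !rw_tens !rw_1 muln1 mul1n.
  have r2 : rmax (row_mx ((1%:M : bmx nA nA) *t B^T) (A^T *t (1%:M : bmx nB nB))) = cmax A + cmax B.
    rewrite /rmax /cmax; apply: max_tens_sum => // a b.
    by rewrite rw_rowmx !rw_tens !rw_1 muln1 mul1n !rw_tr addnC.
  have c1 : cmax (col_mx (row_mx (A *t (1%:M : bmx mB mB)) ((1%:M : bmx mA mA) *t B)) (row_mx ((1%:M : bmx nA nA) *t B^T) (A^T *t (1%:M : bmx nB nB)))) = maxn (cmax A + rmax B) (rmax A + cmax B).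
    rewrite /cmax big_split_ord /=; congr maxn.
      rewrite /rmax; apply: max_tens_sum => // a b.
      by rewrite cw_colmx !cw_rowmx_l !cw_tens !cw_1 muln1 mul1n !cw_tr.
    rewrite /rmax; apply: max_tens_sum => // a b.
    by rewrite cw_colmx !cw_rowmx_r !cw_tens !cw_1 muln1 mul1n !cw_tr addnC.
  rewrite rmax_colmx r1 r2 c1.
  lia.
split; last split => //.
  move=> C [e1 e2 e3 e4]; rewrite /lrc_depth e1 e2 e3 e4 /hgp_LX /hgp_RZ /hgp_LZ /hgp_RX.
  by rewrite delta_tens1 // delta_1tens // delta_tens1 // delta_1tens // !delta_tr !maxnn.
move=> R T S t Ht; rewrite -dXZ; exact: depth_lb Ht.
Qed.
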